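(* Let $T:\mathbb Z^n\to\mathbb Z^m$ be a linear map whose matrix in the standard bases has all entries in $\{0,1\}$. Let $Y$ be the image of $T$, $k$ the rank of $Y$, and $Z=\{z\in\mathbb Z^m:\exists q\in\mathbb Z\setminus\{0\}\text{ with }qz\in Y\}$. Then $Z/Y$ (which is isomorphic to the torsion subgroup of $\mathbb Z^m/Y$) has order at most $\left\lfloor 2^{-k}(k+1)^{(k+1)/2}\right\rfloor$. *)

(* Defs.v *)
From HB Require Import structures.
From mathcomp Require Import all_boot all_order all_algebra.
From mathcomp Require Import reals.
Set Implicit Arguments. Unset Strict Implicit. Unset Printing Implicit Defensive.
Import Order.TTheory GRing.Theory Num.Theory.
Local Open Scope ring_scope.

Definition inImage (m n : nat) (T : 'M[int]_(m, n)) (y : 'cV[int]_m) : Prop :=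
  exists x : 'cV[int]_n, y = T *m x.

Definition inSat (m n : nat) (T : 'M[int]_(m, n)) (z : 'cV[int]_m) : Prop :=
  exists q : int, q != 0 /\ inImage T (q *: z).

(* rank of Y = rank of the matrix T over Q *)
Definition rankY (m n : nat) (T : 'M[int]_(m, n)) : nat :=
  \rank (map_mx (fun x : int => (x%:~R : rat)) T).

Definition bound (R : realType) (k : nat) : int :=
  Num.floor ((2 : R) ^- k * Num.sqrt ((k.+1)%:R ^+ k.+1)).

(* Main.v *)
Require Import Defs.
From HB Require Import structures.
From mathcomp Require Import all_boot all_order all_algebra.
From mathcomp Require Import reals.
From mathcomp Require Import ring.
Import Order.TTheory GRing.Theory Num.Theory.
Local Open Scope ring_scope.

Set Implicit Arguments. Unset Strict Implicit. Unset Printing Implicit Defensive.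

Definition rdot (F : realFieldType) n (M : 'M[F]_n) (i j : 'I_n) := \sum_l M i l * M j l.

Lemma rdotC (F : realFieldType) n (M : 'M[F]_n) i j : rdot M i j = rdot M j i.
Proof. by apply: eq_bigr => l _; rewrite mulrC. Qed.

Lemma rdot_ge0 (F : realFieldType) n (M : 'M[F]_n) i : 0 <= rdot M i i.
Proof. by apply: sumr_ge0 => l _; rewrite -expr2 sqr_ge0. Qed.

Lemma rdot_eq0 (F : realFieldType) n (M : 'M[F]_n) i : rdot M i i = 0 -> forall l, M i l = 0.
Proof.
move=> /eqP; rewrite psumr_eq0 => [/allP H l|l _]; last by rewrite -expr2 sqr_ge0.
by have /implyP/(_ isT) := H l (mem_index_enum _); rewrite -expr2 sqrf_eq0 => /eqP.
Qed.

Lemma gs_step (F : realFieldType) n (Q : 'M[F]_n) (k : 'I_n) :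
  (forall i j : 'I_n, (i < k)%N -> (j < k)%N -> i != j -> rdot Q i j = 0) ->
  exists Q' : 'M[F]_n, [/\ \det Q' = \det Q,
    forall i, rdot Q' i i <= rdot Q i i,
    forall i, i != k -> forall l, Q' i l = Q i l &
    forall j : 'I_n, (j < k)%N -> rdot Q' k j = 0].
Proof.
move=> orth.
pose c (j : 'I_n) := if (j < k)%N then rdot Q k j / rdot Q j j else 0.
pose s l := \sum_j c j * Q j l.
pose Q' := \matrix_(i, l) (Q i l - (i == k)%:R * s l).
have Q'k l : Q' k l = Q k l - s l by rewrite mxE eqxx mul1r.
have Q'i i : i != k -> forall l, Q' i l = Q i l.
  by move=> /negPf ik l; rewrite mxE ik mul0r subr0.
have ck : c k = 0 by rewrite /c ltnn.
have orth' (j : 'I_n) : (j < k)%N -> rdot Q' k j = 0.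
  move=> jk; have jnk : j != k by rewrite neq_ltn jk.
  rewrite /rdot (eq_bigr (fun l => Q k l * Q j l - s l * Q j l)); last first.
    by move=> l _; rewrite Q'k Q'i // mulrBl.
  rewrite sumrB.
  have -> : \sum_l s l * Q j l = c j * rdot Q j j.
    rewrite /s (eq_bigr (fun l => \sum_j' c j' * Q j' l * Q j l)); last first.
      by move=> l _; rewrite mulr_suml.
    rewrite exchange_big (bigD1 j) //= [X in _ + X]big1 ?addr0.
      by rewrite /rdot mulr_sumr; apply: eq_bigr => l _; rewrite mulrA.
    move=> j' j'j; transitivity (c j' * rdot Q j' j).
      by rewrite /rdot mulr_sumr; apply: eq_bigr => l _; rewrite mulrA.
    rewrite /c; case: ifP => j'k; last by rewrite mul0r.
    by rewrite (orth j' j) // mulr0.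
  rewrite /c jk; have [z|nz] := eqVneq (rdot Q j j) 0.
    rewrite z mulr0 subr0 /rdot big1 // => l _.
    by rewrite (rdot_eq0 z) mulr0.
  by rewrite divfK // subrr.
exists Q'; split => //.
- have -> : Q' = (\matrix_(i, j) ((i == j)%:R - (i == k)%:R * c j)) *m Q.
    apply/matrixP => i l; rewrite !mxE.
    rewrite (eq_bigr (fun j => (i == j)%:R * Q j l - (i == k)%:R * (c j * Q j l))); last first.
      by move=> j _; rewrite mxE mulrBl mulrA.
    rewrite sumrB -mulr_sumr; congr (_ - _).
    rewrite (bigD1 i) //= eqxx mul1r big1 ?addr0 // => j /negPf.
    by rewrite eq_sym => ->; rewrite mul0r.
  rewrite det_mulmx det_trig ?big1 ?mul1r //.
    by move=> i _; rewrite mxE eqxx; case: eqP => [->|]; rewrite ?ck ?mulr0 ?mul0r subr0.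
  apply/is_trig_mxP => i j ij; rewrite mxE.
  rewrite (_ : (i == j) = false); last by apply/negP => /eqP e; rewrite e ltnn in ij.
  case: eqP => [ik|]; last by rewrite mul0r subrr.
  by rewrite /c -ik ltnNge (ltnW ij) /= mulr0 subrr.
- move=> i; have [->|ik] := eqVneq i k; last first.
    by rewrite /rdot (eq_bigr (fun l => Q i l * Q i l)) // => l _; rewrite !Q'i.
  have dec : rdot Q k k = rdot Q' k k + (2 * \sum_l Q' k l * s l + \sum_l s l * s l).
    rewrite /rdot mulr_sumr -!big_split /=; apply: eq_bigr => l _.
    have -> : Q k l = Q' k l + s l by rewrite Q'k subrK.
    by rewrite Q'k; ring.
  rewrite dec; have -> : \sum_l Q' k l * s l = 0.
    rewrite /s (eq_bigr (fun l => \sum_j c j * (Q' k l * Q' j l))); last first.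
      move=> l _; rewrite mulr_sumr; apply: eq_bigr => j _.
      have [->|jk] := eqVneq j k; first by rewrite ck !(mul0r, mulr0).
      by rewrite (Q'i j) // mulrCA.
    rewrite exchange_big big1 // => j _; rewrite -mulr_sumr.
    rewrite /c; case: ifP => jk; last by rewrite mul0r.
    by move: (orth' j jk); rewrite /rdot => ->; rewrite mulr0.
  rewrite mulr0 add0r lerDl; apply: sumr_ge0 => l _.
  by rewrite -expr2 sqr_ge0.
Qed.

Lemma gs_ind (F : realFieldType) n (M : 'M[F]_n) t : (t <= n)%N ->
  exists Q : 'M[F]_n, [/\ \det Q = \det M,
    forall i, rdot Q i i <= rdot M i i &
    forall i j : 'I_n, (i < t)%N -> (j < t)%N -> i != j -> rdot Q i j = 0].
Proof.
elim: t => [_|t IH tn].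
  by exists M; split => // i j.
have [Q [dQ nQ oQ]] := IH (ltnW tn).
have [Q' [dQ' nQ' uQ' oQ']] := gs_step (k:=Ordinal tn) oQ.
exists Q'; split.
- by rewrite dQ'.
- by move=> i; apply: le_trans (nQ i).
move=> i j; rewrite !ltnS (leq_eqVlt i) (leq_eqVlt j).
have rdu (a b : 'I_n) : a != Ordinal tn -> b != Ordinal tn -> rdot Q' a b = rdot Q a b.
  by move=> ha hb; apply: eq_bigr => l _; rewrite (uQ' a) // (uQ' b).
have ne (a : 'I_n) : (a < t)%N -> a != Ordinal tn.
  by move=> h; apply/eqP => e; rewrite e /= ltnn in h.
have ei (a : 'I_n) : (a == t :> nat) -> a = Ordinal tn by move=> /eqP e; apply: val_inj.
case/orP => [/ei ->|hi]; case/orP => [/ei ->|hj].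
- by rewrite eqxx.
- by move=> _; rewrite oQ'.
- by move=> _; rewrite rdotC oQ'.
- by move=> ij; rewrite rdu ?ne // oQ.
Qed.

Lemma hadamard (F : realFieldType) n (M : 'M[F]_n) : \det M ^+ 2 <= \prod_i rdot M i i.
Proof.
have [Q [dQ nQ oQ]] := gs_ind M (leqnn n).
have oQ' (i j : 'I_n) : i != j -> rdot Q i j = 0 by move=> ij; apply: oQ.
rewrite -dQ expr2 -{2}det_tr -det_mulmx det_trig; last first.
  apply/is_trig_mxP => i j ij; rewrite mxE; transitivity (rdot Q i j).
    by apply: eq_bigr => l _; rewrite mxE.
  by apply: oQ'; apply/eqP => e; rewrite e ltnn in ij.
rewrite (eq_bigr (fun i => rdot Q i i)); last first.
  by move=> i _; rewrite mxE; apply: eq_bigr => l _; rewrite mxE.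
by apply: ler_prod => i _; rewrite rdot_ge0 nQ.
Qed.


Lemma had01 (F : realFieldType) k (A : 'M[F]_k)
  (hA : forall i j, A i j = 0 \/ A i j = 1) :
  (2 ^+ k * \det A) ^+ 2 <= (k.+1)%:R ^+ k.+1.
Proof.
pose B : 'M[F]_(1 + k) := block_mx (1%:M : 'M_1) (const_mx 1) (const_mx 1) (const_mx 1 - 2 *: A).
have eB : B = block_mx (1%:M : 'M_1) 0 (const_mx 1) 1%:M *m block_mx (1%:M : 'M_1) (const_mx 1) 0 (- 2 *: A).
  rewrite mulmx_block !mul1mx !mul0mx ?mulmx0 ?addr0 ?mulmx1 ?add0r.
  rewrite /B; congr block_mx; congr (_ + _); last by rewrite scaleNr.
  by apply/matrixP => i j; rewrite !mxE big_ord1 !mxE mulr1.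
have dB : \det B = (- 2) ^+ k * \det A.
  by rewrite eB det_mulmx det_lblock det_ublock !det1 !mul1r detZ.
have eB2 i j : B i j ^+ 2 = 1.
  case: (split_ordP i) => i' ->; case: (split_ordP j) => j' ->.
  - by rewrite block_mxEul !ord1 mxE eqxx expr1n.
  - by rewrite block_mxEur mxE expr1n.
  - by rewrite block_mxEdl mxE expr1n.
  rewrite block_mxEdr !mxE; case: (hA i' j') => ->; ring.
have := hadamard B; rewrite dB.
rewrite (eq_bigr (fun _ => (k.+1)%:R)); last first.
  move=> i _; rewrite /rdot (eq_bigr (fun _ => 1)); last by move=> l _; rewrite -expr2 eB2.
  by rewrite sumr_const card_ord add1n.
rewrite prodr_const card_ord add1n.
by rewrite [X in X <= _ -> _]exprMn -exprM mulnC exprM sqrrN -exprM mulnC exprM -exprMn.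
Qed.

Lemma foldr_prod (T : eqType) (f : T -> nat) s :
  foldr muln 1%N (map f s) = (\prod_(x <- s) f x)%N.
Proof. by elim: s => [|a s IH]; rewrite ?big_nil ?big_cons //= IH. Qed.

Lemma lattice_count k (A : 'M[int]_k) (N : nat) (u : 'I_N -> 'cV[int]_k) :
  \det A != 0 ->
  (forall i j, (exists x : 'cV[int]_k, u i - u j = A *m x) -> i = j) ->
  N%:Z <= `|\det A|.
Proof.
move=> dA0 hu.
have [L uL [R uR [d _ eA]]] := int_Smith_normal_form A.
set D := \matrix_(i, j) _ in eA.
have detD : \det D = \prod_(l < k) d`_l.
  rewrite det_trig; first by apply: eq_bigr => l _; rewrite mxE eqxx mulr1n.
  apply/is_trig_mxP => i j ij; rewrite mxE.
  by rewrite (_ : (i == j :> nat) = false) ?mulr0n //; apply/negP => /eqP e; rewrite e ltnn in ij.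
have absu (M : 'M[int]_k) : M \in unitmx -> `|\det M| = 1.
  by rewrite unitmxE => /orP [] /eqP ->.
have eabs : `|\det A| = \prod_(l < k) `|d`_l|.
  by rewrite eA !det_mulmx !normrM (absu L) // (absu R) // mul1r mulr1 detD normr_prod.
have dl0 (l : 'I_k) : d`_l != 0.
  move: dA0; rewrite eA !det_mulmx detD !mulf_eq0 negb_or => /andP [/norP [_ ]].
  by rewrite prodf_seq_eq0 => /hasPn /(_ l (mem_index_enum _)) /= ? _.
pose e (l : 'I_k) := absz (d`_l).
pose v i := invmx L *m u i.
have ltv (i : 'I_N) (l : 'I_k) : (absz (modz (v i l 0)%R (d`_l)) < e l)%N.
  rewrite -ltz_nat /e !abszE (ger0_norm (modz_ge0 _ (dl0 l))).
  exact: ltz_mod.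
pose g (i : 'I_N) : {dffun forall l : 'I_k, 'I_(e l)} :=
  [ffun l => Ordinal (ltv i l)].
have ginj : injective g.
  move=> i j /ffunP gij; apply: hu.
  pose w := \col_l (divz (v i l 0 - v j l 0) (d`_l)).
  exists (invmx R *m w).
  have Dw : D *m w = v i - v j.
    apply/matrixP => l z; rewrite !ord1.
    have hm : modz (v i l 0)%R (d`_l) = modz (v j l 0)%R (d`_l).
      have := gij l; rewrite !ffunE => /(congr1 val) /= /(congr1 Posz).
      by rewrite !abszE !ger0_norm ?modz_ge0 ?dl0.
    rewrite [LHS]mxE (bigD1 l) //= big1 ?addr0; last first.
      by move=> l' /negPf nl; rewrite mxE val_eqE eq_sym nl mulr0n mul0r.
    rewrite [D l l]mxE eqxx mulr1n [w l 0]mxE [RHS]mxE mulrC divzK //.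
      rewrite !mxE /=. reflexivity.
    by rewrite -eqz_mod_dvd; apply/eqP.
  rewrite eA -!mulmxA mulKVmx // Dw /v -mulmxBr mulKVmx //.
have := leq_card g ginj.
rewrite card_ord card_dep_ffun foldr_prod big_enum /= => hN.
rewrite eabs; apply: le_trans (_ : (\prod_(l < k) (e l))%:Z <= _).
  by rewrite lez_nat; apply: (leq_trans hN); rewrite leq_eqVlt; apply/orP; left; apply/eqP; apply: eq_bigr => l _; rewrite card_ord.
rewrite (big_morph Posz PoszM (erefl _)) le_eqVlt; apply/orP; left; apply/eqP.
by apply: eq_bigr => l _; rewrite /e abszE.
Qed.

Lemma sat_sub m n (T : 'M[int]_(m, n)) z1 z2 :
  inSat T z1 -> inSat T z2 -> inSat T (z1 - z2).
Proof.
move=> [q1 [q10 [y1 e1]]] [q2 [q20 [y2 e2]]].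
exists (q1 * q2); split; first by rewrite mulf_neq0.
exists (q2 *: y1 - q1 *: y2).
rewrite mulmxBr -!scalemxAr -e1 -e2 scalerBr !scalerA [q2 * q1]mulrC.
by [].
Qed.


Unset Implicit Arguments.

Theorem lemma2p14 (R : realType) (m n : nat) (T : 'M[int]_(m, n))
  (hT : forall i j, T i j = 0 \/ T i j = 1)
  (N : nat) (f : 'I_N -> 'cV[int]_m)
  (hZ : forall i, inSat T (f i))
  (hdist : forall i j, inImage T (f i - f j) -> i = j) :
  (N%:Z <= bound R (rankY T))%R.
Proof.
rewrite /rankY.
set TQ := map_mx _ T.
set k := \rank TQ.
pose f1 := maxrankfun TQ.
pose B := rowsub f1 TQ.
have rfB : row_full B^T by rewrite /row_full mxrank_tr; exact: maxrowsub_free.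
pose f2 := fullrankfun rfB.
have uAQ : mxsub f1 f2 TQ \in unitmx.
  have := fullrowsub_unit rfB; rewrite -unitmx_tr.
  by rewrite -/f2 (_ : (rowsub f2 B^T)^T = mxsub f1 f2 TQ) //; apply/matrixP => i j; rewrite !mxE.
pose AZ := mxsub f1 f2 T.
have dAZ : \det AZ != 0.
  move: uAQ; rewrite unitmxE unitfE.
  rewrite (_ : mxsub f1 f2 TQ = map_mx intr AZ); last by apply/matrixP => i j; rewrite !mxE.
  by rewrite det_map_mx intr_eq0.
have hC (v : 'cV[int]_n) : rowsub f1 (T *m v) = 0 -> T *m v = 0.
  move=> h0.
  have : (TQ <= B)%MS by rewrite eq_maxrowsub.
  case/submxP => D eD.
  have : map_mx intr (T *m v) = 0 :> 'cV[rat]_m.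
    rewrite (map_mxM (intr : int -> rat)) -/TQ eD -mulmxA.
    have -> : B *m map_mx intr v = map_mx intr (rowsub f1 (T *m v)).
      apply/matrixP => i j; rewrite !mxE rmorph_sum; apply: eq_bigr => l _.
      by rewrite !mxE rmorphM.
    by rewrite h0 map_mx0 mulmx0.
  move=> /matrixP h; apply/matrixP => i j; have := h i j.
  by rewrite !mxE => /eqP; rewrite intr_eq0 => /eqP.
have hK (z : 'cV[int]_m) (x : 'cV[int]_k) : inSat T z -> rowsub f1 z = AZ *m x -> inImage T z.
  move=> [q [q0 [y0 e0]]] ex.
  pose P : 'M[int]_(n, k) := \matrix_(j, l) ((f2 l == j)%:R).
  have rP : rowsub f1 (T *m (P *m x)) = AZ *m x.
    apply/matrixP => i j; rewrite mulmxA !mxE; apply: eq_bigr => l _; rewrite !mxE.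
    rewrite mulr_suml (bigD1 (f2 l)) //= big1 ?addr0; first by rewrite !mxE eqxx mulr1.
    by move=> j' /negPf nj; rewrite !mxE eq_sym nj mulr0 mul0r.
  exists (P *m x).
  pose w := z - T *m (P *m x).
  have rw : rowsub f1 w = 0.
    apply/matrixP => i j; have h1 : (rowsub f1 z) i j = (AZ *m x) i j by rewrite ex.
    have h2 : (rowsub f1 (T *m (P *m x))) i j = (AZ *m x) i j by rewrite rP.
    move: h1 h2.
    by rewrite /w !mxE => -> ->; rewrite subrr.
  have qw : q *: w = T *m (y0 - q *: (P *m x)).
    by rewrite /w scalerBr e0 mulmxBr scalemxAr.
  have w0 : T *m (y0 - q *: (P *m x)) = 0.
    apply: hC; rewrite -qw; apply/matrixP => i j.
    have : (rowsub f1 w) i j = 0 by rewrite rw mxE.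
    by rewrite /= !mxE => ->; rewrite mulr0.
  apply/eqP; rewrite -subr_eq0; apply/eqP; apply/matrixP => i j.
  have : (q *: w) i j = 0 by rewrite qw w0 mxE.
  rewrite !mxE => /eqP.
  by rewrite mulf_eq0 (negPf q0) /= => /eqP.
pose u i := rowsub f1 (f i).
have hN : N%:Z <= `|\det AZ|.
  apply: (lattice_count (u := u) dAZ) => i j [x ex]; apply: hdist.
  apply: (hK _ x (sat_sub (hZ i) (hZ j))); rewrite -ex.
  by apply/matrixP => a b; rewrite !mxE.
have hH := had01 (F := R) (A := map_mx intr AZ).
rewrite det_map_mx in hH.
have {}hH : (2 ^+ k * (\det AZ)%:~R) ^+ 2 <= (k.+1)%:R ^+ k.+1 :> R.
  apply: hH => i j; rewrite !mxE.
  by case: (hT (f1 i) (f2 j)) => ->; [left|right].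
rewrite /bound; apply: le_trans hN _.
rewrite floor_ge_int intr_norm ler_pdivlMl ?exprn_gt0 //.
rewrite -[2 ^+ k]ger0_norm ?exprn_ge0 // -normrM -sqrtr_sqr ler_sqrt //.
by rewrite exprn_ge0.
Qed.
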